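(* Let $\omega\in\mathbb{R}^d$, $N\in\mathbb{N}$, $\rho>0$, $n\ge1$, and let $\Gamma\subset\mathbb{C}$ be finite with $0<\#\Gamma\le n$, such that every $\alpha\in\Gamma$ is $(N,\rho)$-linked to some $\beta\in\Gamma$. Let $\mathcal{E}\subseteq\Gamma$ be an equivalence class for the relation of being $(N,\rho)$-chain-linked. If $\mathcal{E}$ contains no odd $(N,\rho)$-loop, then there is a partition $\mathcal{E}=\Sigma_1\cup\Sigma_2$ such that: (i) if $\beta,\gamma\in\Sigma_1$ then $\beta$ and $\gamma$ are not $(N,\rho)$-linked, and likewise for $\Sigma_2$; (ii) if $\beta,\gamma\in\Sigma_1$ then $\beta$ and $\bar\gamma$ are $(nN,n\rho)$-linked, and likewise for $\Sigma_2$; (iii) if $\beta\in\Sigma_1$ and $\gamma\in\Sigma_2$ then $\beta$ and $\gamma$ are $(nN,n\rho)$-linked.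
   Context: For $k\in\mathbb{Z}^d$, $|k|=\sum_i|k_i|$. Two complex numbers $\alpha,\beta$ are $(N,\rho)$-linked if $|2i\pi\langle k,\omega\rangle-(\alpha-\bar\beta)|<\rho$ for some $k\in\mathbb{Z}^d$ with $|k|\le N$. An $(N,\rho)$-chain in $\Gamma$ of length $r-1$ is a sequence $\alpha_1,\dots,\alpha_r$ in $\Gamma$ with $\alpha_j$ and $\alpha_{j+1}$ $(N,\rho)$-linked for all $j$; $\alpha_1$ and $\alpha_r$ are then $(N,\rho)$-chain-linked. An $(N,\rho)$-loop is such a chain with $\alpha_1=\alpha_r$ (and $r\ge2$); it is odd if its length is odd. Under the stated hypothesis on $\Gamma$, being $(N,\rho)$-chain-linked is an equivalence relation on $\Gamma$. *)

(* Defs.v *)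
From Stdlib Require Import Reals List ZArith.
From Coquelicot Require Import Coquelicot.
Open Scope R_scope.

(* Vectors in Z^d / R^d are represented as functions nat -> _, of which only
   the coordinates 0..d-1 are used. *)

Definition l1norm (d : nat) (k : nat -> Z) : Z :=
  fold_right Z.add 0%Z (map (fun i => Z.abs (k i)) (seq 0 d)).

Definition dotZR (d : nat) (k : nat -> Z) (omega : nat -> R) : R :=
  fold_right Rplus 0 (map (fun i => IZR (k i) * omega i) (seq 0 d)).

Definition linked (d : nat) (omega : nat -> R) (N : nat) (rho : R)
  (alpha beta : C) : Prop :=
  exists k : nat -> Z, (l1norm d k <= Z.of_nat N)%Z /\
    Cmod (Ci * RtoC (2 * PI * dotZR d k omega) - (alpha - Cconj beta)) < rho.

Definition chain (d : nat) (omega : nat -> R) (N : nat) (rho : R)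
  (Gamma : C -> Prop) (l : list C) : Prop :=
  l <> nil /\ (forall x, In x l -> Gamma x) /\
  (forall j, (S j < length l)%nat ->
     linked d omega N rho (nth j l 0) (nth (S j) l 0)).

Definition chain_linked (d : nat) (omega : nat -> R) (N : nat) (rho : R)
  (Gamma : C -> Prop) (a b : C) : Prop :=
  exists l, chain d omega N rho Gamma l /\
    nth 0 l 0 = a /\ nth (length l - 1) l 0 = b.

Definition odd_loop (d : nat) (omega : nat -> R) (N : nat) (rho : R)
  (E : C -> Prop) (l : list C) : Prop :=
  chain d omega N rho E l /\ (2 <= length l)%nat /\
  nth 0 l 0 = nth (length l - 1) l 0 /\ Nat.Odd (length l - 1).

Definition finite_card (Gamma : C -> Prop) (c : nat) : Prop :=
  exists l : list C, NoDup l /\ length l = c /\ (forall x, Gamma x <-> In x l).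

Definition chain_class (d : nat) (omega : nat -> R) (N : nat) (rho : R)
  (Gamma E : C -> Prop) : Prop :=
  exists a, Gamma a /\
    (forall x, E x <-> (Gamma x /\ chain_linked d omega N rho Gamma a x)).

(* Main.v *)
Require Import Defs.
From Stdlib Require Import Reals List ZArith Lia Lra Classical.
From Coquelicot Require Import Coquelicot.
Open Scope R_scope.
Import ListNotations.

Fixpoint lch {A} (r : A -> A -> Prop) (x : A) (l : list A) : Prop :=
  match l with nil => True | y :: t => r x y /\ lch r y t end.

Lemma last_cons' {A} (y x : A) t : last (y :: t) x = last t y.
Proof.
  revert y x; induction t as [|a t IH]; intros y x; [reflexivity|].
  change (last (a :: t) x = last (a :: t) y). rewrite !IH. reflexivity.
Qed.

Lemma last_app' {A} (l1 l2 : list A) x : last (l1 ++ l2) x = last l2 (last l1 x).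
Proof.
  revert x; induction l1 as [|y l1 IH]; intro x; simpl; [reflexivity|].
  change (last (y :: (l1 ++ l2)) x = last l2 (last (y :: l1) x)).
  rewrite !last_cons'. apply IH.
Qed.

Lemma lch_app {A} (r : A -> A -> Prop) x l1 l2 :
  lch r x (l1 ++ l2) <-> lch r x l1 /\ lch r (last l1 x) l2.
Proof.
  revert x; induction l1 as [|y l1 IH]; intro x; [simpl; tauto|].
  change (r x y /\ lch r y (l1 ++ l2) <-> (r x y /\ lch r y l1) /\ lch r (last (y :: l1) x) l2).
  rewrite last_cons', IH. tauto.
Qed.

Lemma lch_nth {A} (r : A -> A -> Prop) (d0 : A) x l :
  (forall j, (S j < length (x :: l))%nat -> r (nth j (x :: l) d0) (nth (S j) (x :: l) d0))
  <-> lch r x l.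
Proof.
  revert x; induction l as [|y t IH]; intro x; simpl.
  - split; [tauto|]. intros _ j Hj. lia.
  - rewrite <- IH. split.
    + intros H. split.
      * apply (H 0%nat). lia.
      * intros j Hj. apply (H (S j)). simpl in *. lia.
    + intros [H1 H2] j Hj. destruct j; [exact H1|]. apply H2. simpl in *. lia.
Qed.

Lemma nth_len_last {A} (x d : A) l : nth (length l) (x :: l) d = last l x.
Proof.
  revert x; induction l as [|y t IH]; intro x; [reflexivity|].
  rewrite last_cons'. simpl length. rewrite <- IH. reflexivity.
Qed.

Lemma lch_rev {A} (r : A -> A -> Prop) (sym : forall a b, r a b -> r b a) x l :
  lch r x l -> exists l', lch r (last l x) l' /\ last l' (last l x) = x /\
    length l' = length l /\ (forall y, In y l' -> In y (x :: l)).
Proof.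
  revert x; induction l as [|y t IH]; intros x H.
  - exists nil; simpl; repeat split; tauto.
  - destruct H as [Hxy Ht]. destruct (IH y Ht) as (l' & H1 & H2 & H3 & H4).
    rewrite last_cons'. exists (l' ++ [x]). repeat split.
    + apply lch_app. split; [exact H1|]. rewrite H2. simpl. split; auto.
    + rewrite last_app'. reflexivity.
    + rewrite length_app. simpl. lia.
    + intros z Hz. apply in_app_iff in Hz. destruct Hz as [Hz|Hz].
      * right. apply H4. exact Hz.
      * left. destruct Hz as [<-|[]]. reflexivity.
Qed.

Lemma not_NoDup_split {A} (l : list A) : ~ NoDup l ->
  exists a l1 l2 l3, l = l1 ++ a :: l2 ++ a :: l3.
Proof.
  induction l as [|a t IH]; intro H.
  - exfalso; apply H; constructor.
  - destruct (classic (In a t)) as [Hi|Hi].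
    + destruct (in_split _ _ Hi) as (l2 & l3 & ->). exists a, nil, l2, l3. reflexivity.
    + destruct IH as (b & l1 & l2 & l3 & ->).
      * intro Hn. apply H. constructor; assumption.
      * exists b, (a :: l1), l2, l3. reflexivity.
Qed.

Lemma cut0 {A} (r : A -> A -> Prop) y l2 l3 : lch r y (l2 ++ y :: l3) -> lch r y l3.
Proof. intro H. apply lch_app in H. destruct H as [_ [_ H]]. exact H. Qed.

Lemma shorten {A} (r : A -> A -> Prop) x l : lch r x l ->
  exists l', lch r x l' /\ last l' x = last l x /\ incl (x :: l') (x :: l) /\ NoDup (x :: l').
Proof.
  remember (length l) as m eqn:Hm. revert l Hm.
  induction m as [m IHm] using (well_founded_induction lt_wf).
  intros l Hm H.
  destruct (classic (NoDup (x :: l))) as [Hn|Hn].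
  { exists l. repeat split; auto. apply incl_refl. }
  destruct (not_NoDup_split _ Hn) as (y & l1 & l2 & l3 & E).
  assert (exists l'', lch r x l'' /\ last l'' x = last l x /\ incl (x :: l'') (x :: l)
           /\ (length l'' < length l)%nat) as (l'' & A1 & A2 & A3 & A4).
  { destruct l1 as [|z l1'].
    - simpl in E. injection E as <- ->.
      exists l3. split; [apply (cut0 _ _ _ _ H)|]. split.
      + rewrite last_app', last_cons'. reflexivity.
      + split.
        * intros w Hw. destruct Hw as [<-|Hw]; [left; reflexivity|]. right.
          apply in_app_iff. right. right. exact Hw.
        * rewrite length_app. simpl. lia.
    - simpl in E. injection E as <- ->.
      exists (l1' ++ y :: l3). apply lch_app in H. destruct H as [H1 [H2 H3]].
      split; [apply lch_app; split; [exact H1|split; [exact H2|apply (cut0 _ _ _ _ H3)]]|].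
      split; [rewrite !last_app', !last_cons', last_app', last_cons'; reflexivity|].
      split.
      + intros w Hw. destruct Hw as [<-|Hw]; [left; reflexivity|]. right.
        apply in_app_iff in Hw. apply in_app_iff. destruct Hw as [Hw|Hw]; [left; exact Hw|].
        right. destruct Hw as [<-|Hw]; [left; reflexivity|]. right. apply in_app_iff. right. right. exact Hw.
      + rewrite !length_app. simpl. rewrite length_app. simpl. lia. }
  destruct (IHm (length l'') ltac:(lia) l'' eq_refl A1) as (l' & B1 & B2 & B3 & B4).
  exists l'. repeat split; auto.
  - rewrite B2; exact A2.
  - intros w Hw. apply A3, B3, Hw.
Qed.

Definition wk d omega k : C := Ci * RtoC (2 * PI * dotZR d k omega).

Lemma fold_sub (s : list nat) (k1 k2 : nat -> Z) (omega : nat -> R) :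
  fold_right Rplus 0 (map (fun i => IZR (k1 i - k2 i) * omega i) s) =
  fold_right Rplus 0 (map (fun i => IZR (k1 i) * omega i) s) -
  fold_right Rplus 0 (map (fun i => IZR (k2 i) * omega i) s).
Proof. induction s; simpl; [ring|]. rewrite IHs, minus_IZR. ring. Qed.

Lemma fold_abs (s : list nat) (k1 k2 : nat -> Z) :
  (fold_right Z.add 0 (map (fun i => Z.abs (k1 i - k2 i)) s) <=
  fold_right Z.add 0 (map (fun i => Z.abs (k1 i)) s) +
  fold_right Z.add 0 (map (fun i => Z.abs (k2 i)) s))%Z.
Proof. induction s; simpl; lia. Qed.

Lemma fold_zero (s : list nat) (omega : nat -> R) :
  fold_right Rplus 0 (map (fun i => IZR 0 * omega i) s) = 0 /\
  fold_right Z.add 0%Z (map (fun i : nat => Z.abs 0%Z) s) = 0%Z.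
Proof. split; induction s; simpl in *; auto; try rewrite IHs; ring. Qed.

Lemma linked_sym d omega N rho a b : linked d omega N rho a b -> linked d omega N rho b a.
Proof.
  intros (k & Hk & Hc). exists k. split; [exact Hk|].
  replace (Ci * RtoC (2 * PI * dotZR d k omega) - (b - Cconj a))%C with
    (Copp (Cconj (Ci * RtoC (2 * PI * dotZR d k omega) - (a - Cconj b))))%C.
  - rewrite Cmod_opp, Cmod_conj. exact Hc.
  - destruct a as [a1 a2], b as [b1 b2].
    unfold Copp, Cconj, Cminus, Cplus, Copp, Cmult, Ci, RtoC; simpl.
    f_equal; ring.
Qed.

Definition par (m : nat) (x : C) : C := if Nat.even m then x else Cconj x.

Lemma est d omega N rho b l : 0 < rho -> lch (linked d omega N rho) b l ->
  exists k, (l1norm d k <= Z.of_nat (length l * N))%Z /\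
   Cmod (Ci * RtoC (2 * PI * dotZR d k omega) - (b - par (length l) (last l b))) < INR (length l + 1) * rho.
Proof.
  intro Hr; revert b; induction l as [|y t IH]; intros b H.
  - exists (fun _ => 0%Z). unfold l1norm, dotZR.
    destruct (fold_zero (seq 0 d) omega) as [-> ->]. split; [simpl; lia|].
    replace (Ci * RtoC (2 * PI * 0) - (b - par (length []) (last [] b)))%C with (RtoC 0).
    + rewrite Cmod_0. simpl. lra.
    + destruct b as [b1 b2]. unfold par; simpl.
      unfold Copp, Cconj, Cminus, Cplus, Copp, Cmult, Ci, RtoC; simpl. f_equal; ring.
  - destruct H as [H1 H2]. destruct H1 as (k1 & Hk1 & Hc1).
    destruct (IH y H2) as (k2 & Hk2 & Hc2).
    exists (fun i => (k1 i - k2 i)%Z). split.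
    + unfold l1norm in *. eapply Z.le_trans; [apply fold_abs|]. simpl length. lia.
    + rewrite last_cons'. simpl length.
      replace (par (S (length t)) (last t y)) with (Cconj (par (length t) (last t y))).
      2:{ unfold par. rewrite Nat.even_succ, <- Nat.negb_even. destruct (Nat.even (length t)); simpl; [reflexivity|apply Cconj_conj]. }
      set (P := par (length t) (last t y)) in *.
      replace (Ci * RtoC (2 * PI * dotZR d (fun i => (k1 i - k2 i)%Z) omega) - (b - Cconj P))%C
        with ((Ci * RtoC (2 * PI * dotZR d k1 omega) - (b - Cconj y)) +
              Cconj (Ci * RtoC (2 * PI * dotZR d k2 omega) - (y - P)))%C.
      * eapply Rle_lt_trans; [apply Cmod_triangle|]. rewrite Cmod_conj.
        rewrite plus_INR in *. rewrite S_INR. simpl in *. lra.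
      * unfold dotZR. rewrite fold_sub. fold (dotZR d k1 omega). fold (dotZR d k2 omega).
        destruct b as [b1 b2], y as [y1 y2], P as [p1 p2].
        unfold Copp, Cconj, Cminus, Cplus, Copp, Cmult, Ci, RtoC; simpl. f_equal; ring.
Qed.

Lemma last_in {A} (a : A) l : In (last l a) (a :: l).
Proof.
  revert a; induction l as [|y t IH]; intro a; [left; reflexivity|].
  rewrite last_cons'. right. apply IH.
Qed.

Lemma cl_iff d omega N rho G a x : chain_linked d omega N rho G a x <->
  exists l, (forall y, In y (a :: l) -> G y) /\ lch (linked d omega N rho) a l /\ last l a = x.
Proof.
  split.
  - intros (L & (Hne & HG & Hn) & H0 & H1). destruct L as [|a' l]; [congruence|].
    simpl in H0. subst a'. exists l. split; [exact HG|]. split.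
    + exact (proj1 (lch_nth _ _ a l) Hn).
    + rewrite <- (nth_len_last a 0). rewrite <- H1. simpl. rewrite Nat.sub_0_r. reflexivity.
  - intros (l & HG & Hl & Hx). exists (a :: l). split; [split; [congruence|split; [exact HG|]]|].
    + exact (proj2 (lch_nth _ _ a l) Hl).
    + split; [reflexivity|]. simpl length. rewrite Nat.sub_succ, Nat.sub_0_r, nth_len_last. exact Hx.
Qed.

Ltac par_solve :=
  unfold Nat.Even, Nat.Odd in *;
  repeat match goal with H : exists _, _ |- _ => destruct H end; lia.

Lemma ev_of (m : nat) : (Nat.Odd m -> False) -> Nat.Even m.
Proof. intro H. destruct (Nat.Even_or_Odd m) as [|Ho]; [assumption|exfalso; auto]. Qed.
Lemma od_of (m : nat) : (Nat.Even m -> False) -> Nat.Odd m.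
Proof. intro H. destruct (Nat.Even_or_Odd m) as [He|]; [exfalso; auto|assumption]. Qed.

Lemma odd_even_false m : Nat.Odd m -> Nat.even m = false.
Proof. intro H. rewrite <- Nat.negb_odd. apply Nat.odd_spec in H. rewrite H. reflexivity. Qed.

Theorem lemma13 (d : nat) (omega : nat -> R) (N : nat) (rho : R) (n : nat)
  (Gamma : C -> Prop) :
  0 < rho -> (1 <= n)%nat ->
  (exists c, (0 < c)%nat /\ (c <= n)%nat /\ finite_card Gamma c) ->
  (forall a, Gamma a -> exists b, Gamma b /\ linked d omega N rho a b) ->
  forall E : C -> Prop, chain_class d omega N rho Gamma E ->
  (~ exists l, odd_loop d omega N rho E l) ->
  exists S1 S2 : C -> Prop,
    (forall x, E x <-> (S1 x \/ S2 x)) /\ (forall x, ~ (S1 x /\ S2 x)) /\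
    (forall b g, S1 b -> S1 g -> ~ linked d omega N rho b g) /\
    (forall b g, S2 b -> S2 g -> ~ linked d omega N rho b g) /\
    (forall b g, S1 b -> S1 g ->
       linked d omega (n * N) (INR n * rho) b (Cconj g)) /\
    (forall b g, S2 b -> S2 g ->
       linked d omega (n * N) (INR n * rho) b (Cconj g)) /\
    (forall b g, S1 b -> S2 g ->
       linked d omega (n * N) (INR n * rho) b g).
Proof.
  intros Hr Hn (c & Hc0 & Hcn & Lg & Hnd & Hlen & HG) _ E (a & Ga & HE) Hno.
  set (lk := linked d omega N rho).
  set (W := fun l x => (forall y, In y (a :: l) -> Gamma y) /\ lch lk a l /\ last l a = x).
  assert (HE' : forall x, E x <-> exists l, W l x).
  { intro x. rewrite HE, cl_iff. split; [tauto|].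
    intros (l & H1 & H2 & H3). split; [|exists l; auto]. apply H1. rewrite <- H3. apply last_in. }
  assert (Wel : forall l x, W l x -> forall y, In y (a :: l) -> E y).
  { intros l x (H1 & H2 & H3) y Hy. apply HE'. destruct Hy as [<-|Hy].
    - exists nil. split; [|split; [exact I|reflexivity]]. intros z [<-|[]]. exact Ga.
    - destruct (in_split _ _ Hy) as (l1 & l2 & ->). exists (l1 ++ [y]). split; [|split].
      + intros z Hz. apply H1. destruct Hz as [<-|Hz]; [left; reflexivity|]. right.
        apply in_app_iff in Hz. apply in_app_iff. destruct Hz as [Hz|[<-|[]]]; [left; exact Hz|].
        right; left; reflexivity.
      + apply lch_app in H2. apply lch_app. destruct H2 as [H2 [H4 _]]. simpl. tauto.
      + rewrite last_app'. reflexivity. }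
  assert (Par : forall l1 l2 x, W l1 x -> W l2 x -> Nat.Even (length l1 + length l2)).
  { intros l1 l2 x Hw1 Hw2. pose proof Hw1 as (A1 & A2 & A3). pose proof Hw2 as (B1 & B2 & B3).
    destruct (lch_rev lk (linked_sym d omega N rho) a l2 B2) as (l2' & C1 & C2 & C3 & C4).
    rewrite B3 in C1, C2.
    apply ev_of. intro Ho. apply Hno. exists (a :: l1 ++ l2').
    split; [split; [congruence|split]|split; [|split]].
    - intros y Hy. destruct Hy as [<-|Hy]; [apply (Wel _ _ Hw1); left; reflexivity|].
      apply in_app_iff in Hy. destruct Hy as [Hy|Hy].
      + apply (Wel _ _ Hw1). right; exact Hy.
      + apply (Wel _ _ Hw2). apply C4, Hy.
    - apply (proj2 (lch_nth _ _ _ _)). apply lch_app. rewrite A3. auto.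
    - simpl. rewrite length_app, C3. destruct Ho. lia.
    - simpl length. rewrite Nat.sub_succ, Nat.sub_0_r, nth_len_last, last_app', A3, C2. reflexivity.
    - simpl length. rewrite Nat.sub_succ, Nat.sub_0_r, length_app, C3. exact Ho. }
  assert (Short : forall b g lb lg, W lb b -> W lg g -> exists l', lch lk b l' /\ last l' b = g /\
            (length l' + 1 <= n)%nat /\ Nat.Even (length lb + length l' + length lg)).
  { intros b g lb lg Hwb Hwg. pose proof Hwb as (A1 & A2 & A3). pose proof Hwg as (B1 & B2 & B3).
    destruct (lch_rev lk (linked_sym d omega N rho) a lb A2) as (rb & C1 & C2 & C3 & C4).
    rewrite A3 in C1, C2.
    assert (Hw : lch lk b (rb ++ lg)) by (apply lch_app; rewrite C2; auto).
    destruct (shorten lk b _ Hw) as (l' & D1 & D2 & D3 & D4).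
    assert (Hinc : forall y, In y (b :: l') -> Gamma y).
    { intros y Hy. apply D3 in Hy. destruct Hy as [<-|Hy].
      - apply A1. rewrite <- A3. apply last_in.
      - apply in_app_iff in Hy. destruct Hy as [Hy|Hy]; [apply A1, C4, Hy|apply B1; right; exact Hy]. }
    rewrite last_app', C2, B3 in D2.
    exists l'. split; [exact D1|split; [exact D2|split]].
    - assert (length (b :: l') <= length Lg)%nat.
      { apply NoDup_incl_length; [exact D4|]. intros y Hy. apply HG, Hinc, Hy. }
      simpl in H. lia.
    - rewrite <- length_app. apply (Par _ _ g).
      + split; [|split].
        * intros y Hy. destruct Hy as [<-|Hy]; [exact Ga|]. apply in_app_iff in Hy.
          destruct Hy as [Hy|Hy]; [apply A1; right; exact Hy|apply Hinc; right; exact Hy].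
        * apply lch_app. rewrite A3. auto.
        * rewrite last_app', A3. exact D2.
      + exact Hwg. }
  assert (Fin : forall b g l', lch lk b l' -> last l' b = g -> (length l' + 1 <= n)%nat ->
     exists k, (l1norm d k <= Z.of_nat (n * N))%Z /\
       Cmod (Ci * RtoC (2 * PI * dotZR d k omega) - (b - par (length l') g)) < INR n * rho).
  { intros b g l' H1 H2 H3. destruct (est d omega N rho b l' Hr H1) as (k & K1 & K2).
    rewrite H2 in K2. exists k. split.
    - eapply Z.le_trans; [exact K1|]. apply Nat2Z.inj_le. apply Nat.mul_le_mono_r. lia.
    - eapply Rlt_le_trans; [exact K2|]. apply Rmult_le_compat_r; [lra|]. apply le_INR; exact H3. }
  exists (fun x => E x /\ exists l, W l x /\ Nat.Even (length l)).
  exists (fun x => E x /\ exists l, W l x /\ Nat.Odd (length l)).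
  split; [|split; [|split; [|split; [|split; [|split]]]]].
  - intro x. split.
    + intro Hx. pose proof Hx as Hx'. apply HE' in Hx' as (l & Hl).
      destruct (Nat.Even_or_Odd (length l)); [left|right]; split; eauto.
    + intros [[H _]|[H _]]; exact H.
  - intros x [[_ (l1 & W1 & P1)] [_ (l2 & W2 & P2)]].
    pose proof (Par _ _ _ W1 W2). par_solve.
  - intros b g [_ (lb & Wb & Pb)] [Eg (lg & Wg & Pg)] Hbg.
    assert (Wbg : W (lb ++ [g]) g).
    { destruct Wb as (A1 & A2 & A3). split; [|split].
      - intros y Hy. destruct Hy as [<-|Hy]; [exact Ga|]. apply in_app_iff in Hy.
        destruct Hy as [Hy|[<-|[]]]; [apply A1; right; exact Hy|]. apply HE in Eg. tauto.
      - apply lch_app. rewrite A3. simpl. auto.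
      - rewrite last_app'. reflexivity. }
    pose proof (Par _ _ _ Wbg Wg). rewrite length_app in H. simpl in H. par_solve.
  - intros b g [_ (lb & Wb & Pb)] [Eg (lg & Wg & Pg)] Hbg.
    assert (Wbg : W (lb ++ [g]) g).
    { destruct Wb as (A1 & A2 & A3). split; [|split].
      - intros y Hy. destruct Hy as [<-|Hy]; [exact Ga|]. apply in_app_iff in Hy.
        destruct Hy as [Hy|[<-|[]]]; [apply A1; right; exact Hy|]. apply HE in Eg. tauto.
      - apply lch_app. rewrite A3. simpl. auto.
      - rewrite last_app'. reflexivity. }
    pose proof (Par _ _ _ Wbg Wg). rewrite length_app in H. simpl in H. par_solve.
  - intros b g [_ (lb & Wb & Pb)] [_ (lg & Wg & Pg)].
    destruct (Short _ _ _ _ Wb Wg) as (l' & H1 & H2 & H3 & H4).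
    destruct (Fin _ _ _ H1 H2 H3) as (k & K1 & K2). exists k. split; [exact K1|].
    assert (Nat.Even (length l')) as He by (apply ev_of; intro; par_solve).
    unfold par in K2. apply Nat.even_spec in He. rewrite He in K2. rewrite Cconj_conj. exact K2.
  - intros b g [_ (lb & Wb & Pb)] [_ (lg & Wg & Pg)].
    destruct (Short _ _ _ _ Wb Wg) as (l' & H1 & H2 & H3 & H4).
    destruct (Fin _ _ _ H1 H2 H3) as (k & K1 & K2). exists k. split; [exact K1|].
    assert (Nat.Even (length l')) as He by (apply ev_of; intro; par_solve).
    unfold par in K2. apply Nat.even_spec in He. rewrite He in K2. rewrite Cconj_conj. exact K2.
  - intros b g [_ (lb & Wb & Pb)] [_ (lg & Wg & Pg)].
    destruct (Short _ _ _ _ Wb Wg) as (l' & H1 & H2 & H3 & H4).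
    destruct (Fin _ _ _ H1 H2 H3) as (k & K1 & K2). exists k. split; [exact K1|].
    assert (Nat.Odd (length l')) as Ho by (apply od_of; intro; par_solve).
    unfold par in K2. rewrite (odd_even_false _ Ho) in K2. exact K2.
Qed.
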